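(* Let $\beta\ge 1$ and let $R=(S^0,\dots,S^T)$ be a $\beta$-bounded $T$-covering in a congestion game in which every delay function is $f(x)=x$, and assume $\mathrm{OPT}>0$. Then $$\frac{\rho(R)}{\mathrm{OPT}}\le 2\,\frac{H(R)}{\mathrm{OPT}}+4\beta+1.$$
   Context: A congestion game has players $N=\{1,\dots,n\}$, a finite resource set $E$ and strategy sets $\Sigma_i\subseteq 2^E$. For a profile $S=(s_1,\dots,s_n)$, $n_e(S)=|\{i: e\in s_i\}|$. Here all delays are $f(x)=x$, so the cost of player $i$ is $c_i(S)=\sum_{e\in s_i}n_e(S)$ and the social cost is $C(S)=\sum_i c_i(S)=\sum_{e\in E}n_e(S)^2$. Fix an optimal profile $S^*=(s_1^*,\dots,s_n^* )$ minimizing $C$ and write $\mathrm{OPT}=C(S^* )$. A best response of player $i$ in $S$ is a strategy $s_i^b\in\Sigma_i$ minimizing $c_i(S_{-i},\cdot)$ over $\Sigma_i$ (where $(S_{-i},s_i')$ replaces $s_i$ by $s_i'$); if no strategy strictly decreases $i$'s cost, the best response is $s_i$ itself. A $T$-covering is a sequence of profiles $R=(S^0,\dots,S^T)$ together with players $\pi(1),\dots,\pi(T)$ such that for each $1\le t\le T$, $S^t=(S^{t-1}_{-\pi(t)},s')$ where $s'$ is a best response of $\pi(t)$ in $S^{t-1}$, and every player of $N$ occurs at least once among $\pi(1),\dots,\pi(T)$. It is $\beta$-bounded if every player occurs at most $\beta$ times among $\pi(1),\dots,\pi(T)$. For each player $i$, $\mathrm{last}(i)=\max\{t:\pi(t)=i\}$.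 Define $\rho(R)=\sum_{i=1}^n\sum_{e\in s_i^*}\bigl(n_e(S^{\mathrm{last}(i)-1})+1\bigr)$ and $H(R)=\sum_{i=1}^n\sum_{e\in s_i^*}n_e(S^0)=\sum_{e\in E}n_e(S^0)\,n_e(S^* )$. *)

(* Defs.v *)
From HB Require Import structures.
From mathcomp Require Import all_boot all_order all_algebra.
Set Implicit Arguments. Unset Strict Implicit. Unset Printing Implicit Defensive.

Definition profile (n : nat) (E : finType) := {ffun 'I_n -> {set E}}.

Section Congestion.
Variables (n : nat) (E : finType).

Definition load (S : profile n E) (e : E) : nat := #|[set i : 'I_n | e \in S i]|.

Definition cost (S : profile n E) (i : 'I_n) : nat := \sum_(e in S i) load S e.

Definition social_cost (S : profile n E) : nat := \sum_(i < n) cost S i.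

Definition valid (Sigma : 'I_n -> {set {set E}}) (S : profile n E) : Prop :=
  forall i, S i \in Sigma i.

Definition upd (S : profile n E) (i : 'I_n) (s : {set E}) : profile n E :=
  [ffun j => if j == i then s else S j].

Definition best_response (Sigma : 'I_n -> {set {set E}}) (S : profile n E)
    (i : 'I_n) (s' : {set E}) : Prop :=
  [/\ s' \in Sigma i,
      (forall s, s \in Sigma i -> cost (upd S i s') i <= cost (upd S i s) i) &
      ((forall s, s \in Sigma i -> ~~ (cost (upd S i s) i < cost S i)) -> s' = S i)].

Definition optimal (Sigma : 'I_n -> {set {set E}}) (Sstar : profile n E) : Prop :=
  valid Sigma Sstar /\
  forall S, valid Sigma S -> social_cost Sstar <= social_cost S.

Definition is_covering (Sigma : 'I_n -> {set {set E}}) (T : nat)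
    (Sq : nat -> profile n E) (pi : nat -> 'I_n) : Prop :=
  [/\ valid Sigma (Sq 0),
      (forall t, 1 <= t <= T ->
         exists s', best_response Sigma (Sq t.-1) (pi t) s' /\
                    Sq t = upd (Sq t.-1) (pi t) s') &
      (forall i : 'I_n, exists t, 1 <= t <= T /\ pi t = i)].

Definition bounded (beta T : nat) (pi : nat -> 'I_n) : Prop :=
  forall i : 'I_n, count (fun t => pi t == i) (iota 1 T) <= beta.

Definition last_occ (T : nat) (pi : nat -> 'I_n) (i : 'I_n) : nat :=
  \max_(1 <= t < T.+1 | pi t == i) t.

Definition rho (Sstar : profile n E) (T : nat) (Sq : nat -> profile n E)
    (pi : nat -> 'I_n) : nat :=
  \sum_(i < n) \sum_(e in Sstar i) (load (Sq (last_occ T pi i).-1) e + 1).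

Definition Hval (Sstar : profile n E) (Sq : nat -> profile n E) : nat :=
  \sum_(i < n) \sum_(e in Sstar i) load (Sq 0) e.

End Congestion.

(* Main.v *)
Require Import Defs.
From HB Require Import structures.
From mathcomp Require Import all_boot all_order all_algebra zify.
Import Order.TTheory GRing.Theory Num.Theory.

Set Implicit Arguments. Unset Strict Implicit. Unset Printing Implicit Defensive.

Section Aux.
Variables (n : nat) (E : finType).

Lemma sum_exch (S : profile n E) (f : E -> nat) :
  \sum_(i < n) \sum_(e in S i) f e = \sum_e load S e * f e.
Proof.
rewrite (eq_bigr (fun i => \sum_e (if e \in S i then f e else 0))); last first.
  by move=> i _; rewrite big_mkcond.
rewrite exchange_big; apply: eq_bigr => e _.
rewrite -big_mkcond /= sum_nat_const /load; congr (_ * _).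
by apply: eq_card => i; rewrite inE.
Qed.

Lemma load_upd_le1 (S : profile n E) (j : 'I_n) (s : {set E}) (e : E) : load (upd S j s) e <= (load S e).+1.
Proof.
have sub : [set i | e \in upd S j s i] \subset j |: [set i | e \in S i].
  apply/subsetP => i; rewrite !inE ffunE.
  by case: eqP => [->|_ ->]; rewrite ?eqxx ?orbT.
rewrite /load; apply: leq_trans (subset_leq_card sub) _.
by rewrite cardsU1; case: (_ \notin _).
Qed.

Lemma load_upd_notin (S : profile n E) (j : 'I_n) (s : {set E}) (e : E) : e \notin s -> load (upd S j s) e <= load S e.
Proof.
move=> he; rewrite /load; apply: subset_leq_card; apply/subsetP => i; rewrite !inE ffunE.
by case: eqP => [_ h|_ ->]; [rewrite h in he|].
Qed.

Lemma cost_upd_le (S : profile n E) (j : 'I_n) (s : {set E}) : cost (upd S j s) j <= \sum_(e in s) (load S e).+1.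
Proof.
rewrite /cost ffunE eqxx; apply: leq_sum => e _; exact: load_upd_le1.
Qed.

Lemma arith_step (a z l ls : nat) (b : bool) :
  z <= a -> ls <= a -> l <= ls.+1 -> (~~ b -> l <= ls) ->
  (maxn a l - z) * (maxn a l - z).+1 <= (a - z) * (a - z).+1 + 2 * (if b then l else 0).
Proof.
move=> hz hls hl hb.
case: (leqP l a) => hla.
  by rewrite leq_addr.
have el : l = a.+1 by lia.
case: b hb => hb; last by have := hb isT; lia.
subst l. have -> : a.+1 - z = (a - z).+1 by lia.
nia.
Qed.


Definition mx (Sq : nat -> profile n E) t e := \max_(u < t.+1) load (Sq u) e.
Definition dd (Sq : nat -> profile n E) t e := mx Sq t e - load (Sq 0) e.

Lemma mx_ge (Sq : nat -> profile n E) u t e : u <= t -> load (Sq u) e <= mx Sq t e.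
Proof.
move=> h; rewrite /mx; exact: (@leq_bigmax _ (fun u : 'I_t.+1 => load (Sq u) e) (Ordinal (h : u < t.+1))).
Qed.

Lemma mxS (Sq : nat -> profile n E) t e : mx Sq t.+1 e = maxn (mx Sq t e) (load (Sq t.+1) e).
Proof. by rewrite /mx big_ord_recr. Qed.

Lemma mx0 (Sq : nat -> profile n E) e : mx Sq 0 e = load (Sq 0) e.
Proof. by rewrite /mx big_ord1. Qed.

Lemma pot_step (Sq : nat -> profile n E) t (j : 'I_n) (s : {set E}) :
  Sq t.+1 = upd (Sq t) j s ->
  \sum_e dd Sq t.+1 e * (dd Sq t.+1 e).+1 <=
  \sum_e dd Sq t e * (dd Sq t e).+1 + 2 * cost (Sq t.+1) j.
Proof.
move=> heq.
have hj : Sq t.+1 j = s by rewrite heq ffunE eqxx.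
rewrite /cost [X in _ + 2 * X]big_mkcond big_distrr -big_split /=; apply: leq_sum => e _.
rewrite hj /dd mxS; apply: (arith_step (ls := load (Sq t) e)).
- exact: mx_ge.
- exact: mx_ge.
- rewrite heq; exact: load_upd_le1.
- by move=> he; rewrite heq; exact: load_upd_notin.
Qed.

Lemma pot_bound (Sigma : 'I_n -> {set {set E}}) T (Sq : nat -> profile n E) (pi : nat -> 'I_n) :
  is_covering Sigma T Sq pi -> forall t, t <= T ->
  \sum_e dd Sq t e * (dd Sq t e).+1 <= 2 * \sum_(1 <= u < t.+1) cost (Sq u) (pi u).
Proof.
case=> _ hmv _; elim=> [|t IH] ht.
  by rewrite big1 // => e _; rewrite /dd mx0 subnn.
have [s' [_ heq]] := hmv t.+1 ht.
apply: leq_trans (pot_step heq) _.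
rewrite big_nat_recr //= mulnDr leq_add2r; apply: IH; exact: ltnW.
Qed.

Lemma cost_bound (Sigma : 'I_n -> {set {set E}}) (Sstar : profile n E) T
    (Sq : nat -> profile n E) (pi : nat -> 'I_n) u :
  optimal Sigma Sstar -> is_covering Sigma T Sq pi -> 1 <= u <= T ->
  cost (Sq u) (pi u) <= \sum_(f in Sstar (pi u)) (mx Sq T f).+1.
Proof.
move=> [hval _] [_ hmv _] hu.
have [s' [[_ hmin _] heq]] := hmv u hu.
rewrite heq; apply: leq_trans (hmin _ (hval (pi u))) _.
apply: leq_trans (cost_upd_le _ _ _) _.
apply: leq_sum => f _; rewrite ltnS; apply: mx_ge.
case/andP: hu => _ hu; exact: leq_trans (leq_pred _) hu.
Qed.

Lemma sum_count (F : 'I_n -> nat) (pi : nat -> 'I_n) (s : seq nat) :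
  \sum_(u <- s) F (pi u) = \sum_j count (fun t => pi t == j) s * F j.
Proof.
elim: s => [|x s IH].
  by rewrite big_nil big1 // => j _; rewrite mul0n.
rewrite big_cons IH /=.
under [RHS]eq_bigr do rewrite mulnDl.
rewrite big_split /=; congr (_ + _).
rewrite (bigD1 (pi x)) //= eqxx mul1n big1 ?addn0 // => j hj.
by rewrite eq_sym (negbTE hj).
Qed.

Lemma last_le T (pi : nat -> 'I_n) i : last_occ T pi i <= T.
Proof.
rewrite /last_occ big_seq_cond; apply: (big_ind (fun x => x <= T)) => //.
  by move=> x y hx hy; rewrite geq_max hx hy.
by move=> t /andP[]; rewrite mem_index_iota ltnS => /andP[].
Qed.

Lemma amgm0 (y d : nat) : 2 * y * d <= y * y + d * d.+1.
Proof.
case: (leqP d y) => hd.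
  have [x ->] : exists x, y = d + x by exists (y - d); lia.
  nia.
have [x ->] : exists x, d = y + x by exists (d - y); lia.
nia.
Qed.

Lemma amgm (b a d : nat) : 8 * b * (a * d) <= 16 * b * b * (a * a) + d * d.+1.
Proof.
have e1 : 8 * b * (a * d) = 2 * (4 * b * a) * d by nia.
have e2 : 16 * b * b * (a * a) = (4 * b * a) * (4 * b * a) by nia.
rewrite e1 e2; exact: amgm0.
Qed.

End Aux.

Theorem lemma3 (n : nat) (E : finType) (Sigma : 'I_n -> {set {set E}})
    (Sstar : profile n E) (T : nat) (Sq : nat -> profile n E)
    (pi : nat -> 'I_n) (beta : nat) :
  (1 <= beta)%N ->
  optimal Sigma Sstar ->
  (0 < social_cost Sstar)%N ->
  is_covering Sigma T Sq pi ->
  bounded beta T pi ->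
  ((rho Sstar T Sq pi)%:R / (social_cost Sstar)%:R
     <= 2 * (Hval Sstar Sq)%:R / (social_cost Sstar)%:R + (4 * beta + 1)%:R
   :> rat)%R.
Proof.
move=> hb hopt hpos hcov hbd.
set OPT := social_cost Sstar.
set RR := \sum_(j < n) \sum_(f in Sstar j) (mx Sq T f).+1.
set h := \sum_e load Sstar e * load (Sq 0) e.
set z := \sum_e load Sstar e * dd Sq T e.
set k := \sum_e load Sstar e.
set q := \sum_e dd Sq T e * (dd Sq T e).+1.
have h1 : rho Sstar T Sq pi <= RR.
  apply: leq_sum => i _; apply: leq_sum => e _.
  rewrite addn1 ltnS; apply: mx_ge.
  exact: leq_trans (leq_pred _) (last_le _ _ _).
have hRR : RR = h + z + k.
  rewrite /RR sum_exch /h /z /k -!big_split /=; apply: eq_bigr => e _.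
  rewrite /dd -mulnDr subnKC ?mulnSr //; exact: mx_ge.
have hH : Hval Sstar Sq = h by rewrite /Hval sum_exch.
have hO : OPT = \sum_e load Sstar e * load Sstar e by rewrite /OPT /social_cost /cost sum_exch.
have hk : k <= OPT by rewrite hO; apply: leq_sum => e _; nia.
have hq : q <= 2 * (beta * RR).
  apply: leq_trans (pot_bound hcov (leqnn T)) _; rewrite leq_mul2l /=.
  apply: (@leq_trans (\sum_(u <- index_iota 1 T.+1)
                         (fun j => \sum_(f in Sstar j) (mx Sq T f).+1) (pi u))).
    rewrite big_seq [X in _ <= X]big_seq; apply: leq_sum => u.
    rewrite mem_index_iota => hu; exact: (cost_bound hopt hcov hu).
  rewrite (sum_count (fun j => \sum_(f in Sstar j) (mx Sq T f).+1)) /RR big_distrr /=; apply: leq_sum => j _.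
  rewrite leq_mul2r; apply/orP; right.
  have := hbd j; by rewrite /index_iota subn1.
have hamgm : 8 * beta * z <= 16 * beta * beta * OPT + q.
  have : \sum_e 8 * beta * (load Sstar e * dd Sq T e) <=
         \sum_e (16 * beta * beta * (load Sstar e * load Sstar e) + dd Sq T e * (dd Sq T e).+1).
    by apply: leq_sum => e _; apply: amgm.
  by rewrite big_split /= -!big_distrr /= -hO.
have hz : 3 * z <= 8 * beta * OPT + h + k.
  have : 2 * beta * (4 * z) <= 2 * beta * (8 * beta * OPT + h + z + k).
    rewrite hRR in hq; nia.
  rewrite leq_pmul2l; last by rewrite muln_gt0.
  lia.
have hfin : rho Sstar T Sq pi <= 2 * h + (4 * beta + 1) * OPT by nia.
have hOp : (0 < OPT%:R :> rat)%R by rewrite ltr0n.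
rewrite ler_pdivrMr // mulrDl mulfVK ?gt_eqF // hH.
rewrite -natrM -natrM -natrD ler_nat.
exact: hfin.
Qed.
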